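(* For a standard finitary set functor $H\colon\mathbf{Set}\to\mathbf{Set}$ the following are equivalent: (1) $H$ is a cia functor; (2) $H\cong H_0(-)+Y$ for some set functor $H_0$ preserving countable coproducts and some set $Y$; (3) $H\cong W\times(-)+Y$ for some sets $W$ and $Y$.
   Context: A set functor $H$ is finitary if for every set $X$, $HX=\bigcup HY$ over finite subsets $Y\subseteq X$; standard if it preserves inclusions ($X\subseteq Y$ implies $HX\subseteq HY$, with $H$ of the inclusion map the inclusion map) and finite intersections. An $H$-algebra $a\colon HA\to A$ is corecursive if for every coalgebra $e\colon X\to HX$ there is a unique $s\colon X\to A$ with $s=a\cdot Hs\cdot e$; it is a cia if for every $e\colon X\to HX+A$ there is a unique $s$ with $s=[a,\mathrm{id}_A]\cdot(Hs+\mathrm{id}_A)\cdot e$. A cia functor is a functor for which every corecursive algebra is a cia. $\cong$ denotes natural isomorphism. *)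

(* Defs.v *)
From Stdlib Require Import List.

Record SetFunctor := {
  Fobj :> Type -> Type;
  Fmap : forall X Y : Type, (X -> Y) -> Fobj X -> Fobj Y;
  Fmap_id : forall (X : Type) (u : Fobj X), Fmap X X (fun x => x) u = u;
  Fmap_comp : forall (X Y Z : Type) (f : X -> Y) (g : Y -> Z) (u : Fobj X),
      Fmap X Z (fun x => g (f x)) u = Fmap Y Z g (Fmap X Y f u)
}.

Arguments Fmap _ {X Y} _ _.

Definition nat_iso (H K : SetFunctor) : Prop :=
  exists (phi : forall X, H X -> K X) (psi : forall X, K X -> H X),
    (forall X u, psi X (phi X u) = u) /\
    (forall X v, phi X (psi X v) = v) /\
    (forall X Y (f : X -> Y) u, phi Y (Fmap H f u) = Fmap K f (phi X u)).

Definition injective {A B} (f : A -> B) : Prop := forall x y, f x = f y -> x = y.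
Definition bijective {A B} (f : A -> B) : Prop :=
  injective f /\ forall y, exists x, f x = y.

Definition finitary (H : SetFunctor) : Prop :=
  forall (X : Type) (u : H X), exists (l : list X) (v : H {x : X | In x l}),
    Fmap H (@proj1_sig X (fun x => In x l)) v = u.

(* Standard: preserves inclusions (rendered as: maps injections to injections)
   and finite intersections (the image of the intersection is the intersection
   of the images). *)
Definition standard (H : SetFunctor) : Prop :=
  (forall (X Y : Type) (m : X -> Y), injective m -> injective (Fmap H m)) /\
  (forall (X : Type) (P Q : X -> Prop) (a : H {x | P x}) (b : H {x | Q x}),
      Fmap H (@proj1_sig X P) a = Fmap H (@proj1_sig X Q) b ->
      exists c : H {x | P x /\ Q x},
        Fmap H (fun z : {x | P x /\ Q x} =>
                  exist P (proj1_sig z) (proj1 (proj2_sig z))) c = a /\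
        Fmap H (fun z : {x | P x /\ Q x} =>
                  exist Q (proj1_sig z) (proj2 (proj2_sig z))) c = b).

Definition preserves_countable_coproducts (H : SetFunctor) : Prop :=
  forall (I : Type) (X : I -> Type), (exists f : I -> nat, injective f) ->
    bijective (fun p : {i : I & H (X i)} =>
                 Fmap H (existT X (projT1 p)) (projT2 p) : H {i : I & X i}).

Definition unique_fun {X A : Type} (P : (X -> A) -> Prop) : Prop :=
  exists s, P s /\ forall s', P s' -> forall x, s' x = s x.

Definition corecursive (H : SetFunctor) (A : Type) (a : H A -> A) : Prop :=
  forall (X : Type) (e : X -> H X),
    unique_fun (fun s : X -> A => forall x, s x = a (Fmap H s (e x))).

Definition cia (H : SetFunctor) (A : Type) (a : H A -> A) : Prop :=
  forall (X : Type) (e : X -> H X + A),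
    unique_fun (fun s : X -> A => forall x,
      s x = match e x with inl u => a (Fmap H s u) | inr y => y end).

Definition cia_functor (H : SetFunctor) : Prop :=
  forall (A : Type) (a : H A -> A), corecursive H A a -> cia H A a.

Definition sum_const_functor (H0 : SetFunctor) (Y : Type) : SetFunctor.
Proof.
  refine {| Fobj := fun X => (H0 X + Y)%type;
            Fmap := fun X Z f u => match u with
                                   | inl h => inl (Fmap H0 f h)
                                   | inr y => inr y end |}.
  - intros X [h|y]; [now rewrite Fmap_id | reflexivity].
  - intros X Z V f g [h|y]; [now rewrite Fmap_comp | reflexivity].
Defined.

Definition lin_functor (W Y : Type) : SetFunctor.
Proof.
  refine {| Fobj := fun X => ((W * X) + Y)%type;
            Fmap := fun X Z f u => match u with
                                   | inl (w, x) => inl (w, f x)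
                                   | inr y => inr y end |}.
  - intros X [[w x]|y]; reflexivity.
  - intros X Z V f g [[w x]|y]; reflexivity.
Defined.

(* Main.v *)
Require Import Defs.
From Stdlib Require Import List Classical ClassicalEpsilon FunctionalExtensionality ProofIrrelevance Lia.

Lemma Fmap_ext (H : SetFunctor) X Y (f g : X -> Y) u :
  (forall x, f x = g x) -> Fmap H f u = Fmap H g u.
Proof. intros E. replace f with g; [reflexivity|]. symmetry; apply functional_extensionality; exact E. Qed.

Lemma sig_eq {T} {P : T -> Prop} (a b : {x | P x}) : proj1_sig a = proj1_sig b -> a = b.
Proof. destruct a, b; simpl; intros ->; f_equal; apply proof_irrelevance. Qed.

Definition img (H : SetFunctor) {X} (P : X -> Prop) (u : H X) : Prop :=
  exists v : H {x | P x}, Fmap H (@proj1_sig X P) v = u.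

Lemma img_mono H X (P Q : X -> Prop) u :
  (forall x, P x -> Q x) -> img H P u -> img H Q u.
Proof.
  intros HPQ [v Hv].
  exists (Fmap H (fun z => exist Q (proj1_sig z) (HPQ _ (proj2_sig z))) v).
  rewrite <- Fmap_comp. exact Hv.
Qed.

Lemma img_inter H X (P Q : X -> Prop) u : standard H ->
  img H P u -> img H Q u -> img H (fun x => P x /\ Q x) u.
Proof.
  intros [_ Hint] [a Ha] [b Hb].
  destruct (Hint X P Q a b) as [c [Hc1 Hc2]]. { congruence. }
  exists c. rewrite <- Ha, <- Hc1, <- Fmap_comp. reflexivity.
Qed.

Lemma pre_inj H X Z (s : X -> Z) (P : Z -> Prop) u : standard H -> injective s ->
  img H P (Fmap H s u) -> img H (fun v => P (s v)) u.
Proof.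
  intros [Hinj Hint] sinj [g Hg].
  set (Q := fun b => exists v, s v = b).
  set (s' := fun v => exist Q (s v) (ex_intro _ v eq_refl)).
  assert (E : Fmap H (@proj1_sig Z Q) (Fmap H s' u) = Fmap H s u)
    by (rewrite <- Fmap_comp; reflexivity).
  destruct (Hint _ P Q g (Fmap H s' u)) as [c [Hc1 Hc2]]. { congruence. }
  assert (r : forall z : {b | P b /\ Q b}, {v | P (s v) /\ s v = proj1_sig z}).
  { intros z. destruct (constructive_indefinite_description _ (proj2 (proj2_sig z))) as [v Hv].
    exists v. rewrite Hv. split; [exact (proj1 (proj2_sig z))|reflexivity]. }
  exists (Fmap H (fun z => exist (fun v => P (s v)) (proj1_sig (r z)) (proj1 (proj2_sig (r z)))) c).
  apply (Hinj _ _ s').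
  { intros a b Hab. apply sinj. exact (f_equal (@proj1_sig _ _) Hab). }
  rewrite <- !Fmap_comp. rewrite <- Hc2. apply Fmap_ext. intros z.
  apply sig_eq. simpl. apply (proj2 (proj2_sig (r z))).
Qed.

Definition dichotomy (H : SetFunctor) : Prop :=
  forall X (u : H X) (x0 : X), img H (fun x => x <> x0) u \/ img H (fun x => x = x0) u.

Definition EM {V} (M : nat) (b : option (nat * V)) : Prop :=
  match b with None => True | Some (m, _) => m <> M end.
Definition FM {V} (M : nat) (b : option (nat * V)) : Prop :=
  match b with None => True | Some (m, _) => m <= M end.

Definition rk_alg (H : SetFunctor) V (v0 : V) (h : H (option (nat * V))) : option (nat * V) :=
  match excluded_middle_informative (exists M, img H (FM M) h /\ ~ img H (EM M) h) with
  | left p => Some (S (proj1_sig (constructive_indefinite_description _ p)), v0)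
  | right _ => None
  end.

Lemma rk_spec H V v0 h :
  (rk_alg H V v0 h = None /\ ~ (exists M, img H (FM M) h /\ ~ img H (EM M) h)) \/
  exists M, rk_alg H V v0 h = Some (S M, v0) /\ img H (FM M) h /\ ~ img H (EM M) h.
Proof.
  unfold rk_alg. destruct excluded_middle_informative as [p|np]; [right|left; auto].
  destruct constructive_indefinite_description as [M HM]; simpl. exists M; auto.
Qed.

Lemma rk_corec H V v0 : corecursive H _ (rk_alg H V v0).
Proof.
  intros X e. exists (fun _ => None). split.
  - intros x. destruct (rk_spec H V v0 (Fmap H (fun _ => None) (e x))) as [[-> _]|[M [_ [_ Hn]]]]; auto.
    exfalso; apply Hn. exists (Fmap H (fun _ => exist (EM M) None I) (e x)).
    rewrite <- Fmap_comp. reflexivity.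
  - intros s' Hs'.
    assert (K : forall n m, m < n -> forall x v, s' x <> Some (m, v)).
    { induction n; intros m Hm; [lia|]. intros x v Hx. rewrite Hs' in Hx.
      destruct (rk_spec H V v0 (Fmap H s' (e x))) as [[Hn _]|[M [HM [_ HnE]]]];
        rewrite ?Hn, ?HM in Hx; [discriminate|].
      injection Hx; intros _ Hm'. subst m.
      assert (HE : forall y, EM M (s' y)).
      { intros y. destruct (s' y) as [[k w]|] eqn:E; simpl; auto.
        intros ->. apply (IHn M ltac:(lia) y w E). }
      apply HnE. exists (Fmap H (fun y => exist (EM M) (s' y) (HE y)) (e x)).
      rewrite <- Fmap_comp. reflexivity. }
    intros x. destruct (s' x) as [[k w]|] eqn:E; [|reflexivity].
    exfalso. apply (K (S k) k ltac:(lia) x w E).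
Qed.

Lemma cia_dich H : standard H -> cia_functor H -> dichotomy H.
Proof.
  intros Hst Hcia V u v1.
  destruct (classic (img H (fun x => x <> v1) u)) as [h1|n1]; [left; exact h1|].
  destruct (classic (img H (fun x => x = v1) u)) as [h2|n2]; [right; exact h2|].
  exfalso.
  set (A := option (nat * V)).
  set (e := fun v : V => match excluded_middle_informative (v = v1) with
                        | left _ => @inl (H V) A u
                        | right _ => inr (Some (0, v)) end).
  destruct (Hcia A (rk_alg H V v1) (rk_corec H V v1) V e) as [s [Hs _]].
  assert (Hoth : forall v, v <> v1 -> s v = Some (0, v)).
  { intros v nv. rewrite Hs. unfold e. destruct excluded_middle_informative; [contradiction|reflexivity]. }
  assert (Hv1 : s v1 = rk_alg H V v1 (Fmap H s u)).
  { rewrite Hs. unfold e. destruct excluded_middle_informative; [reflexivity|contradiction]. }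
  assert (Hnz : forall w, s v1 <> Some (0, w)).
  { intros w. rewrite Hv1. destruct (rk_spec H V v1 (Fmap H s u)) as [[-> _]|[M [-> _]]]; congruence. }
  assert (sinj : injective s).
  { intros a b Hab.
    destruct (classic (a = v1)) as [->|na]; destruct (classic (b = v1)) as [->|nb]; auto.
    - rewrite (Hoth b nb) in Hab. exfalso; eapply Hnz; eauto.
    - rewrite (Hoth a na) in Hab. exfalso; eapply Hnz; eauto.
    - rewrite (Hoth a na), (Hoth b nb) in Hab. congruence. }
  destruct (rk_spec H V v1 (Fmap H s u)) as [[HN Hn]|[M [HM [HF HnE]]]].
  - apply Hn. exists 0. split.
    + assert (HF : forall v, FM 0 (s v)).
      { intros v. destruct (classic (v = v1)) as [->|nv].
        - rewrite Hv1, HN. exact I.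
        - rewrite (Hoth v nv). simpl. lia. }
      exists (Fmap H (fun v => exist (FM 0) (s v) (HF v)) u). rewrite <- Fmap_comp. reflexivity.
    + intros HE. apply n2. apply pre_inj in HE; auto.
      revert HE. apply img_mono. intros v Hv. apply NNPP. intros nv.
      rewrite (Hoth v nv) in Hv. simpl in Hv. auto.
  - destruct M as [|M'].
    + apply n1. apply pre_inj in HF; auto. revert HF. apply img_mono.
      intros v Hv ->. rewrite Hv1, HM in Hv. simpl in Hv. lia.
    + apply HnE.
      assert (HE : forall v, EM (S M') (s v)).
      { intros v. destruct (classic (v = v1)) as [->|nv].
        - rewrite Hv1, HM. simpl. lia.
        - rewrite (Hoth v nv). simpl. lia. }
      exists (Fmap H (fun v => exist (EM (S M')) (s v) (HE v)) u). rewrite <- Fmap_comp. reflexivity.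
Qed.

Lemma iso_of_psi (H K : SetFunctor) (psi : forall X, K X -> H X) :
  (forall X, injective (psi X)) -> (forall X u, exists v, psi X v = u) ->
  (forall X Y (f : X -> Y) v, psi Y (Fmap K f v) = Fmap H f (psi X v)) ->
  nat_iso H K.
Proof.
  intros Hi Hs Hn.
  set (phi := fun X u => proj1_sig (constructive_indefinite_description _ (Hs X u))).
  assert (Hpp : forall X u, psi X (phi X u) = u).
  { intros X u. unfold phi. destruct constructive_indefinite_description; auto. }
  exists phi, psi. split; [exact Hpp|]. split.
  - intros X v. apply Hi. apply Hpp.
  - intros X Y f u. apply Hi. rewrite Hpp, Hn, Hpp. reflexivity.
Qed.

Definition iota X : Empty_set -> X := fun e => match e with end.
Definition isC (H : SetFunctor) X (u : H X) : Prop := exists y, Fmap H (iota X) y = u.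

Section Lin.
Variable H : SetFunctor.
Hypothesis Hst : standard H.
Hypothesis Hfin : finitary H.
Hypothesis Hd : dichotomy H.

Lemma support X (l : list X) (u : H X) : img H (fun x => In x l) u ->
  img H (fun _ => False) u \/ exists x0, img H (fun x => x = x0) u.
Proof.
  revert u; induction l as [|x0 l IH]; intros u Hu.
  - left. revert Hu. apply img_mono. simpl; auto.
  - destruct (Hd X u x0) as [Hne|Heq]; [|right; eauto].
    apply IH. apply (img_mono _ _ (fun x => x <> x0 /\ In x (x0 :: l))).
    + intros x [h1 [h2|h2]]; [congruence|auto].
    + apply img_inter; auto.
Qed.

Lemma imgF_isC X (u : H X) : img H (fun _ => False) u -> isC H X u.
Proof.
  intros [v Hv]. exists (Fmap H (fun z : {x : X | False} => False_rect Empty_set (proj2_sig z)) v).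
  rewrite <- Fmap_comp, <- Hv. apply Fmap_ext. intros [x []].
Qed.

Lemma img_const X (x : X) (w : H unit) : img H (fun z => z = x) (Fmap H (fun _ => x) w).
Proof. exists (Fmap H (fun _ => exist (fun z => z = x) x eq_refl) w). rewrite <- Fmap_comp. reflexivity. Qed.

Lemma constC X (x : X) (w : H unit) : isC H X (Fmap H (fun _ => x) w) -> isC H unit w.
Proof.
  intros [y Hy]. exists y. apply (proj1 Hst _ _ (fun _ : unit => x)).
  { intros [] [] _; reflexivity. }
  rewrite <- Fmap_comp, <- Hy. apply Fmap_ext. intros [].
Qed.

Lemma every X (u : H X) : isC H X u \/ exists x0 (w : H unit), Fmap H (fun _ => x0) w = u.
Proof.
  destruct (Hfin X u) as [l [v Hv]].
  destruct (support X l u (ex_intro _ v Hv)) as [h|[x0 [v' Hv']]].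
  - left; apply imgF_isC; auto.
  - right. exists x0, (Fmap H (fun _ => tt) v'). rewrite <- Fmap_comp, <- Hv'.
    apply Fmap_ext. intros [x e]; simpl; auto.
Qed.

Definition Wt := {w : H unit | ~ isC H unit w}.
Definition Yt := H Empty_set.

Definition psiL X (v : lin_functor Wt Yt X) : H X :=
  match v with inl (w, x) => Fmap H (fun _ => x) (proj1_sig w) | inr y => Fmap H (iota X) y end.

Lemma lin_iso : nat_iso H (lin_functor Wt Yt).
Proof.
  apply (iso_of_psi H (lin_functor Wt Yt) psiL).
  - intros X [[w x]|y] [[w' x']|y']; simpl; intros E.
    + destruct (classic (x = x')) as [<-|nx].
      * f_equal. f_equal. apply sig_eq. apply (proj1 Hst _ _ (fun _ : unit => x)); auto.
        intros [] [] _; reflexivity.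
      * exfalso. apply (proj2_sig w). apply (constC X x). apply imgF_isC.
        apply (img_mono _ _ (fun z => z = x /\ z = x')). { intros z [-> ?]; auto. }
        apply img_inter; auto. apply img_const. rewrite E. apply img_const.
    + exfalso. apply (proj2_sig w). apply (constC X x). exists y'; auto.
    + exfalso. apply (proj2_sig w'). apply (constC X x'). exists y; auto.
    + f_equal. apply (proj1 Hst _ _ (iota X)); auto. intros [].
  - intros X u. destruct (classic (isC H X u)) as [[y Hy]|nc].
    + exists (inr y). exact Hy.
    + destruct (every X u) as [c|[x0 [w Hw]]]; [contradiction|].
      assert (nw : ~ isC H unit w). { intros c. apply nc. rewrite <- Hw. destruct c as [y Hy].
        exists y. rewrite <- Hy, <- Fmap_comp. apply Fmap_ext. intros []. }
      exists (inl (exist _ w nw, x0)). exact Hw.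
  - intros X Y f [[w x]|y]; simpl.
    + rewrite <- Fmap_comp. reflexivity.
    + rewrite <- Fmap_comp. apply Fmap_ext. intros [].
Qed.

End Lin.

Lemma dich_lin H : standard H -> finitary H -> dichotomy H ->
  exists W Y : Type, nat_iso H (lin_functor W Y).
Proof. intros. exists (Wt H), (Yt H). apply lin_iso; auto. Qed.

Section CiaLin.
Variables (W Y A X : Type) (a : (W * A + Y)%type -> A) (e : X -> ((W * X + Y) + A)%type).

Fixpoint valf (n : nat) (x : X) : option A :=
  match e x with
  | inr al => Some al
  | inl (inr _) => None
  | inl (inl (w, x')) => match n with 0 => None | S m => option_map (fun b => a (inl (w, b))) (valf m x') end
  end.

Lemma val_S n x b : valf n x = Some b -> valf (S n) x = Some b.
Proof.
  revert x b; induction n; intros x b Hv; simpl in *; destruct (e x) as [[[w x']|y]|al]; auto; try discriminate.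
  destruct (valf n x') eqn:E; simpl in Hv; [|discriminate].
  rewrite (IHn _ _ E). exact Hv.
Qed.

Lemma val_le n m x b : n <= m -> valf n x = Some b -> valf m x = Some b.
Proof. induction 1; auto. intros; apply val_S; auto. Qed.

Lemma val_uniq n m x b b' : valf n x = Some b -> valf m x = Some b' -> b = b'.
Proof.
  intros H1 H2. apply (val_le n (max n m)) in H1; [|lia]. apply (val_le m (max n m)) in H2; [|lia].
  congruence.
Qed.

Definition Good x := exists b n, valf n x = Some b.

Lemma good_succ x w x' : e x = inl (inl (w, x')) -> Good x <-> Good x'.
Proof.
  intros E; split.
  - intros [b [n Hn]]. destruct n; simpl in Hn; rewrite E in Hn; [discriminate|].
    destruct (valf n x') as [b0|] eqn:E'; [exists b0, n; exact E'|discriminate].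
  - intros [b [n Hn]]. exists (a (inl (w, b))), (S n). simpl. rewrite E, Hn. reflexivity.
Qed.
End CiaLin.

Lemma cia_lin W Y : cia_functor (lin_functor W Y).
Proof.
  intros A a Hcor X e.
  set (X' := {x | ~ Good W Y A X a e x}).
  assert (spec : forall z : X', exists r : (W * X' + Y)%type,
             match r with inl (w, z') => e (proj1_sig z) = inl (inl (w, proj1_sig z'))
                        | inr y => e (proj1_sig z) = inl (inr y) end).
  { intros [x ng]; simpl. destruct (e x) as [[[w x']|y]|al] eqn:E.
    - assert (ng' : ~ Good W Y A X a e x'). { intros g. apply ng. eapply good_succ; eauto. }
      exists (inl (w, exist _ x' ng')). reflexivity.
    - exists (inr y). reflexivity.
    - exfalso. apply ng. exists al, 0. simpl. rewrite E. reflexivity. }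
  set (e' := fun z => proj1_sig (constructive_indefinite_description _ (spec z))).
  assert (He' : forall z, match e' z with inl (w, z') => e (proj1_sig z) = inl (inl (w, proj1_sig z'))
                        | inr y => e (proj1_sig z) = inl (inr y) end).
  { intros z. unfold e'. destruct constructive_indefinite_description; auto. }
  destruct (Hcor X' e') as [t [Ht Htu]].
  set (s := fun x => match excluded_middle_informative (Good W Y A X a e x) with
                     | left g => proj1_sig (constructive_indefinite_description _ g)
                     | right ng => t (exist _ x ng) end).
  assert (s_good : forall x n b, valf W Y A X a e n x = Some b -> s x = b).
  { intros x n b Hn. unfold s. destruct excluded_middle_informative as [g|ng].
    - destruct constructive_indefinite_description as [b' [n' Hn']]; simpl. eapply val_uniq; eauto.
    - exfalso. apply ng. exists b, n; auto. }
  assert (s_bad : forall x (ng : ~ Good W Y A X a e x), s x = t (exist _ x ng)).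
  { intros x ng. unfold s. destruct excluded_middle_informative; [contradiction|].
    f_equal. apply sig_eq. reflexivity. }
  exists s. split.
  - intros x. destruct (e x) as [[[w x']|y]|al] eqn:E; simpl.
    + destruct (classic (Good W Y A X a e x')) as [[b' [n' Hn']]|ng'].
      * rewrite (s_good x' n' b' Hn'). apply (s_good x (S n')). simpl. rewrite E, Hn'. reflexivity.
      * assert (ng : ~ Good W Y A X a e x). { intros g. apply ng'. exact (proj1 (good_succ W Y A X a e x w x' E) g). }
        rewrite (s_bad x ng), Ht. specialize (He' (exist _ x ng)). simpl in He'.
        destruct (e' (exist _ x ng)) as [[w2 z2]|y2]; rewrite E in He'; [|discriminate].
        injection He'; intros E2 E3; subst w2. simpl. f_equal. f_equal. f_equal.
        destruct z2 as [x2 n2]; simpl in E2; subst x2. rewrite (s_bad x' ng'). f_equal. apply sig_eq; reflexivity.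
    + assert (ng : ~ Good W Y A X a e x).
      { intros [b [n Hn]]. destruct n; simpl in Hn; rewrite E in Hn; discriminate. }
      rewrite (s_bad x ng), Ht. specialize (He' (exist _ x ng)). simpl in He'.
      destruct (e' (exist _ x ng)) as [[w2 z2]|y2]; rewrite E in He'; [discriminate|].
      injection He'; intros ->. reflexivity.
    + apply (s_good x 0). simpl. rewrite E. reflexivity.
  - intros s2 Hs2.
    assert (K : forall n x b, valf W Y A X a e n x = Some b -> s2 x = b).
    { induction n; intros x b Hn; simpl in Hn; rewrite Hs2; destruct (e x) as [[[w x']|y]|al];
        try discriminate; try congruence.
      destruct (valf W Y A X a e n x') as [b0|] eqn:E0; simpl in Hn; [|discriminate].
      simpl. rewrite (IHn _ _ E0). congruence. }
    intros x. destruct (classic (Good W Y A X a e x)) as [[b [n Hn]]|ng].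
    + rewrite (K n x b Hn), (s_good x n b Hn). reflexivity.
    + rewrite (s_bad x ng).
      set (t2 := fun z : X' => s2 (proj1_sig z)).
      assert (Ht2 : forall z, t2 z = a (Fmap (lin_functor W Y) t2 (e' z))).
      { intros z. unfold t2. rewrite Hs2. specialize (He' z).
        destruct (e' z) as [[w z']|y]; rewrite He'; reflexivity. }
      exact (Htu t2 Ht2 (exist _ x ng)).
Qed.

Lemma psi_nat (H K : SetFunctor) (phi : forall X, H X -> K X) (psi : forall X, K X -> H X) :
  (forall X u, psi X (phi X u) = u) -> (forall X v, phi X (psi X v) = v) ->
  (forall X Y (f : X -> Y) u, phi Y (Fmap H f u) = Fmap K f (phi X u)) ->
  forall X Y (f : X -> Y) v, psi Y (Fmap K f v) = Fmap H f (psi X v).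
Proof.
  intros H1 H2 H3 X Y f v. rewrite <- (H2 X v) at 1. rewrite <- H3. apply H1.
Qed.

Lemma unique_fun_iff {X A} (P Q : (X -> A) -> Prop) :
  (forall s, P s <-> Q s) -> unique_fun P -> unique_fun Q.
Proof. intros E [s [Ps U]]. exists s. split; [apply E; auto|]. intros s' Qs'. apply U, E, Qs'. Qed.

Lemma cia_transport H K : nat_iso H K -> cia_functor K -> cia_functor H.
Proof.
  intros [phi [psi [H1 [H2 H3]]]] Hc A a Hcor.
  pose proof (psi_nat H K phi psi H1 H2 H3) as Hn.
  assert (Hcor' : corecursive K A (fun k => a (psi A k))).
  { intros X e. apply (unique_fun_iff (fun s => forall x, s x = a (Fmap H s (psi X (e x))))).
    - intros s. split; intros Hs x; rewrite Hs; rewrite Hn; reflexivity.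
    - apply Hcor. }
  intros X e.
  apply (unique_fun_iff (fun s => forall x, s x =
      match (match e x with inl u => inl (phi X u) | inr al => inr al end) with
      | inl k => a (psi A (Fmap K s k)) | inr y => y end)).
  - intros s. split; intros Hs x; rewrite Hs; destruct (e x); auto;
      rewrite <- H3, H1; reflexivity.
  - apply (Hc A _ Hcor').
Qed.

Lemma img_transport (H K : SetFunctor) (phi : forall X, H X -> K X) (psi : forall X, K X -> H X) :
  (forall X u, psi X (phi X u) = u) ->
  (forall X Y (f : X -> Y) v, psi Y (Fmap K f v) = Fmap H f (psi X v)) ->
  forall X (P : X -> Prop) u, img K P (phi X u) -> img H P u.
Proof.
  intros H1 Hn X P u [v Hv]. exists (psi _ v). rewrite <- Hn. etransitivity; [|apply H1]. f_equal. exact Hv.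
Qed.

Lemma dich_transport H K : nat_iso H K -> dichotomy K -> dichotomy H.
Proof.
  intros [phi [psi [H1 [H2 H3]]]] Hd X u x0.
  pose proof (psi_nat H K phi psi H1 H2 H3) as Hn.
  destruct (Hd X (phi X u) x0); [left|right]; eapply img_transport; eauto.
Qed.

Lemma dich_sum H0 Y : preserves_countable_coproducts H0 -> dichotomy (sum_const_functor H0 Y).
Proof.
  intros Hp X u x0. change ((H0 X + Y)%type) in u. destruct u as [h|y].
  2:{ left. exists (@inr (H0 {x : X | x <> x0}) Y y). reflexivity. }
  set (D := fun b : bool => if b then {x : X | x = x0} else {x : X | x <> x0}).
  set (j := fun p : {b : bool & D b} =>
              match p with existT _ b z =>
                (if b as b' return D b' -> X then fun z => proj1_sig z else fun z => proj1_sig z) z end).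
  set (jinv := fun x : X => match excluded_middle_informative (x = x0) with
                           | left e => existT D true (exist _ x e)
                           | right ne => existT D false (exist _ x ne) end).
  assert (Hh : h = Fmap H0 j (Fmap H0 jinv h)).
  { rewrite <- Fmap_comp. rewrite <- (Fmap_id H0 _ h) at 1. apply Fmap_ext.
    intros x. unfold jinv. destruct excluded_middle_informative; reflexivity. }
  assert (Hc : exists f : bool -> nat, injective f).
  { exists (fun b : bool => if b then 1 else 0). intros [] [] E; simpl in E; congruence. }
  destruct (proj2 (Hp bool D Hc) (Fmap H0 jinv h)) as [[b hb] Hb].
  simpl in Hb. rewrite <- Hb in Hh. rewrite <- Fmap_comp in Hh.
  destruct b; [right|left]; exists (inl hb); simpl; rewrite Hh; reflexivity.
Qed.

Definition prod_functor (W : Type) : SetFunctor.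
Proof.
  refine {| Fobj := fun X => (W * X)%type;
            Fmap := fun X Z f u => match u with (w, x) => (w, f x) end |}.
  - intros X [w x]; reflexivity.
  - intros X Z V f g [w x]; reflexivity.
Defined.

Lemma prod_pcc W : preserves_countable_coproducts (prod_functor W).
Proof.
  intros I X _. split.
  - intros [i [w x]] [j [w' x']]. simpl. intros E.
    set (g := fun q : W * {i : I & X i} =>
                match q with (w, existT _ i x) => existT (fun i => (W * X i)%type) i (w, x) end).
    exact (f_equal g E).
  - intros [w [i x]]. exists (existT (fun i => prod_functor W (X i)) i (w, x)). reflexivity.
Qed.

Lemma nat_iso_trans H K L : nat_iso H K -> nat_iso K L -> nat_iso H L.
Proof.
  intros [p1 [q1 [a1 [b1 c1]]]] [p2 [q2 [a2 [b2 c2]]]].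
  exists (fun X u => p2 X (p1 X u)), (fun X v => q1 X (q2 X v)). repeat split.
  - intros. rewrite a2, a1. reflexivity.
  - intros. rewrite b1, b2. reflexivity.
  - intros. rewrite c1, c2. reflexivity.
Qed.

Lemma lin_sum W Y : nat_iso (lin_functor W Y) (sum_const_functor (prod_functor W) Y).
Proof.
  exists (fun X u => u), (fun X u => u). repeat split.
  intros X Z f [[w x]|y]; reflexivity.
Qed.

Theorem mainTheorem11 (H : SetFunctor) :
  standard H -> finitary H ->
  (cia_functor H <->
   (exists (H0 : SetFunctor) (Y : Type),
       preserves_countable_coproducts H0 /\ nat_iso H (sum_const_functor H0 Y))) /\
  ((exists (H0 : SetFunctor) (Y : Type),
       preserves_countable_coproducts H0 /\ nat_iso H (sum_const_functor H0 Y)) <->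
   (exists W Y : Type, nat_iso H (lin_functor W Y))).
Proof.
  intros Hst Hfin.
  assert (T2 : (exists W Y : Type, nat_iso H (lin_functor W Y)) ->
     exists (H0 : SetFunctor) (Y : Type),
       preserves_countable_coproducts H0 /\ nat_iso H (sum_const_functor H0 Y)).
  { intros [W [Y Hi]]. exists (prod_functor W), Y. split; [apply prod_pcc|].
    eapply nat_iso_trans; [exact Hi|apply lin_sum]. }
  assert (T3 : (exists (H0 : SetFunctor) (Y : Type),
       preserves_countable_coproducts H0 /\ nat_iso H (sum_const_functor H0 Y)) ->
       exists W Y : Type, nat_iso H (lin_functor W Y)).
  { intros [H0 [Y [Hp Hi]]]. apply dich_lin; auto.
    eapply dich_transport; [exact Hi|]. apply dich_sum; auto. }
  split; split; auto.
  - intros Hc. apply T2. apply dich_lin; auto. apply cia_dich; auto.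
  - intros Hx. destruct (T3 Hx) as [W [Y Hi]]. eapply cia_transport; [exact Hi|]. apply cia_lin.
Qed.
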